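(* Every normal distribution constraint is satisfiable.
   Context: A distribution constraint is a pair $C=\bigl((\mu^R)_{\emptyset\ne R\subseteq[n]},([t_j,T_j])_{j=1}^n\bigr)$ with $n\in\mathbb{N}$, $\mu^R\ge0$ for each nonempty $R\subseteq[n]$, and $0\le t_j\le T_j$ for each $j\in[n]$. $C$ is satisfiable if there exist reals $\mu^R_j\ge0$ ($R$ nonempty, $j\in[n]$) with $\mu^R_j=0$ for $j\notin R$, $\sum_j\mu^R_j=\mu^R$ for every $R$, and $\sum_R\mu^R_j\in[t_j,T_j]$ for every $j$. For nonempty $S\subseteq[n]$ set $m_C(S)=\sum_{\emptyset\ne R\subseteq S}\mu^R$, $M_C(S)=\sum_{R:\,R\cap S\ne\emptyset}\mu^R$, $t_C(S)=\sum_{j\in S}t_j$, $T_C(S)=\sum_{j\in S}T_j$. $C$ is normal if $t_C(S)\le M_C(S)$ and $m_C(S)\le T_C(S)$ for every nonempty $S\subseteq[n]$. *)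

(* Defs.v *)
From HB Require Import structures.
From mathcomp Require Import all_boot all_order all_algebra.
Set Implicit Arguments. Unset Strict Implicit. Unset Printing Implicit Defensive.
Import Order.TTheory GRing.Theory Num.Theory.
Local Open Scope ring_scope.

(* A distribution constraint on [n] = 'I_n :
   mu : {set 'I_n} -> R  (mu R for nonempty R; the value at set0 is ignored),
   t, T : 'I_n -> R  (the intervals [t_j, T_j]). *)
Definition dc_wf (R : realFieldType) (n : nat) (mu : {set 'I_n} -> R)
    (t T : 'I_n -> R) : Prop :=
  (forall S : {set 'I_n}, S != set0 -> 0 <= mu S) /\
  (forall j, 0 <= t j /\ t j <= T j).

Definition dc_m (R : realFieldType) n (mu : {set 'I_n} -> R) (S : {set 'I_n}) : R :=
  \sum_(Q : {set 'I_n} | (Q != set0) && (Q \subset S)) mu Q.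

Definition dc_M (R : realFieldType) n (mu : {set 'I_n} -> R) (S : {set 'I_n}) : R :=
  \sum_(Q : {set 'I_n} | Q :&: S != set0) mu Q.

Definition dc_t (R : realFieldType) n (t : 'I_n -> R) (S : {set 'I_n}) : R :=
  \sum_(j in S) t j.

Definition dc_normal (R : realFieldType) n (mu : {set 'I_n} -> R)
    (t T : 'I_n -> R) : Prop :=
  forall S : {set 'I_n}, S != set0 ->
    dc_t t S <= dc_M mu S /\ dc_m mu S <= dc_t T S.

Definition dc_satisfiable (R : realFieldType) n (mu : {set 'I_n} -> R)
    (t T : 'I_n -> R) : Prop :=
  exists x : {set 'I_n} -> 'I_n -> R,
    (forall Q j, Q != set0 -> 0 <= x Q j) /\
    (forall Q j, Q != set0 -> j \notin Q -> x Q j = 0) /\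
    (forall Q, Q != set0 -> \sum_j x Q j = mu Q) /\
    (forall j, t j <= \sum_(Q : {set 'I_n} | Q != set0) x Q j <= T j).

(* Main.v *)
Require Import Defs.
From HB Require Import structures.
From mathcomp Require Import all_boot all_order all_algebra.
From mathcomp Require Import lra.
Import Order.TTheory GRing.Theory Num.Theory.
Local Open Scope ring_scope.
Set Implicit Arguments. Unset Strict Implicit.

Lemma sum_option (R : realFieldType) (I : finType) (F : option I -> R) :
  \sum_o F o = F None + \sum_i F (Some i).
Proof.
rewrite [LHS](bigD1 None) //=; congr (_ + _).
rewrite (reindex_omap Some id) /=; last by case.
by apply: eq_bigl => i; rewrite eqxx.
Qed.

Definition cM {n} (X S : {set 'I_n}) := X :&: S != set0.
Definition cm {n} (X S : {set 'I_n}) := (X != set0) && (X \subset S).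

Lemma cM_ne n (X S : {set 'I_n}) : cM X S -> X != set0.
Proof.
rewrite /cM => /set0Pn [x]; rewrite inE => /andP [hx _].
by apply/set0Pn; exists x.
Qed.

Lemma cM_mono n (X A B : {set 'I_n}) : A \subset B -> cM X A -> cM X B.
Proof.
move=> sAB /set0Pn [x]; rewrite inE => /andP [hx ha].
by apply/set0Pn; exists x; rewrite inE hx (subsetP sAB _ ha).
Qed.

Lemma cMP n (X S : {set 'I_n}) : reflect (exists2 x, x \in X & x \in S) (cM X S).
Proof.
rewrite /cM; apply: (iffP (@set0Pn _ (X :&: S))) => [[x]|[x hx hs]]; rewrite ?inE.
  by case/andP => hx hs; exists x.
by exists x; rewrite inE hx hs.
Qed.

Lemma B1 n (X S1 S2 : {set 'I_n}) :
  (cM X (S1 :\: S2) + cm X S2 <= cM X S1 + cm X (S2 :\: S1))%N.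
Proof.
have h1 : cM X (S1 :\: S2) -> cM X S1 by apply: cM_mono; apply: subsetDl.
have h2 : cm X S2 -> ~~ cM X S1 -> cm X (S2 :\: S1).
  case/andP => hne hsub hn; rewrite /cm hne /=; apply/subsetP => x hx.
  rewrite inE (subsetP hsub _ hx) andbT; apply/negP => hs.
  by case/negP: hn; apply/cMP; exists x.
have h3 : cM X (S1 :\: S2) -> ~~ cm X S2.
  case/cMP => x hx; rewrite inE => /andP [hn _]; apply/negP => /andP [_ hs].
  by rewrite (subsetP hs _ hx) in hn.
have k1 : cM X (S1 :\: S2) ==> cM X S1 by apply/implyP.
have k2 : cm X S2 ==> cM X S1 || cm X (S2 :\: S1).
  by apply/implyP => h; case: (boolP (cM X S1)) => //= /(h2 h).
have k3 : ~~ (cM X (S1 :\: S2) && cm X S2).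
  by apply/negP => /andP [a b]; move: (h3 a); rewrite b.
move: k1 k2 k3.
by case: (cM X (S1 :\: S2)) (cm X S2) (cM X S1) (cm X (S2 :\: S1)) => [] [] [] [].
Qed.

Lemma B2 n (X S1 S3 : {set 'I_n}) :
  (cM X (S1 :|: S3) + cM X (S1 :&: S3) <= cM X S1 + cM X S3)%N.
Proof.
have k1 : cM X (S1 :&: S3) ==> cM X S1 && cM X S3.
  apply/implyP => h; rewrite (cM_mono _ h) ?subsetIl //.
  by rewrite (cM_mono _ h) ?subsetIr.
have k2 : cM X (S1 :|: S3) ==> cM X S1 || cM X S3.
  apply/implyP => /cMP [x hx]; rewrite inE => /orP [h|h].
    by apply/orP; left; apply/cMP; exists x.
  by apply/orP; right; apply/cMP; exists x.
move: k1 k2.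
by case: (cM X (S1 :|: S3)) (cM X (S1 :&: S3)) (cM X S1) (cM X S3) => [] [] [] [].
Qed.

Lemma B3 n (X S2 S4 : {set 'I_n}) :
  (cm X S2 + cm X S4 <= cm X (S2 :|: S4) + cm X (S2 :&: S4))%N.
Proof.
have k1 : cm X S2 ==> cm X (S2 :|: S4).
  by apply/implyP => /andP [h1 h2]; rewrite /cm h1 (subset_trans h2) ?subsetUl.
have k2 : cm X S4 ==> cm X (S2 :|: S4).
  by apply/implyP => /andP [h1 h2]; rewrite /cm h1 (subset_trans h2) ?subsetUr.
have k3 : cm X S2 && cm X S4 ==> cm X (S2 :&: S4).
  by apply/implyP => /andP [/andP [h1 h2] /andP [_ h3]]; rewrite /cm h1 subsetI h2 h3.
move: k1 k2 k3.
by case: (cm X S2) (cm X S4) (cm X (S2 :|: S4)) (cm X (S2 :&: S4)) => [] [] [] [].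
Qed.

Lemma cm_ne n (X S : {set 'I_n}) : cm X S -> X != set0.
Proof. by case/andP. Qed.

Lemma le_ind4 (R : realFieldType) (p q r u : bool) (w : R) :
  ((p || q || r || u) -> 0 <= w) -> (p + q <= r + u)%N ->
  (if p then w else 0) + (if q then w else 0) <=
  (if r then w else 0) + (if u then w else 0).
Proof.
by case: p; case: q; case: r; case: u => //= /(_ isT) h _; lra.
Qed.

Lemma sum_special (R : realFieldType) (I : finType) (i0 : I) (F G : I -> R) a :
  F i0 + a <= G i0 -> (forall i, i != i0 -> F i <= G i) ->
  \sum_i F i + a <= \sum_i G i.
Proof.
move=> h0 h; rewrite (bigD1 i0) //= [X in _ <= X](bigD1 i0) //=.
have : \sum_(i | i != i0) F i <= \sum_(i | i != i0) G i by apply: ler_sum.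
lra.
Qed.

Definition gM {R : realFieldType} {n} {I : finType} (s : I -> {set 'I_n})
  (w : I -> R) S := \sum_(i | cM (s i) S) w i.
Definition gm {R : realFieldType} {n} {I : finType} (s : I -> {set 'I_n})
  (w : I -> R) S := \sum_(i | cm (s i) S) w i.
Definition gwf {R : realFieldType} {n} {I : finType} (s : I -> {set 'I_n})
  (w : I -> R) := forall i, s i != set0 -> 0 <= w i.

Lemma gME (R : realFieldType) n (I : finType) (s : I -> {set 'I_n}) (w : I -> R) S :
  gM s w S = \sum_i (if cM (s i) S then w i else 0).
Proof. exact: big_mkcond. Qed.
Lemma gmE (R : realFieldType) n (I : finType) (s : I -> {set 'I_n}) (w : I -> R) S :
  gm s w S = \sum_i (if cm (s i) S then w i else 0).
Proof. exact: big_mkcond. Qed.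

Lemma wpos (R : realFieldType) n (I : finType) (s : I -> {set 'I_n}) (w : I -> R) i
  (p q r u : bool) : gwf s w ->
  (p -> s i != set0) -> (q -> s i != set0) -> (r -> s i != set0) -> (u -> s i != set0) ->
  (p || q || r || u) -> 0 <= w i.
Proof.
move=> hw hp hq hr hu; case/orP => [/orP [/orP [/hp|/hq]|/hr]|/hu]; exact: hw.
Qed.

Lemma K1 (R : realFieldType) n (I : finType) (s : I -> {set 'I_n}) (w : I -> R) i0 S1 S2 :
  gwf s w -> ~~ cM (s i0) (S1 :\: S2) -> ~~ cm (s i0) S2 -> cM (s i0) S1 ->
  gM s w (S1 :\: S2) + gm s w S2 + w i0 <= gM s w S1 + gm s w (S2 :\: S1).
Proof.
move=> hw h1 h2 h3; rewrite !gME !gmE -!big_split /=.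
apply: (sum_special (i0:=i0)).
  rewrite (negbTE h1) (negbTE h2) h3.
  have := hw _ (cM_ne h3); case: ifP => _; lra.
move=> i _; apply: le_ind4; last exact: B1.
apply: (wpos (i:=i) hw); [exact: cM_ne | exact: cm_ne | exact: cM_ne | exact: cm_ne].
Qed.

Lemma K2 (R : realFieldType) n (I : finType) (s : I -> {set 'I_n}) (w : I -> R) i0 S1 S3 :
  gwf s w -> cM (s i0) S1 -> cM (s i0) S3 -> ~~ cM (s i0) (S1 :&: S3) ->
  gM s w (S1 :|: S3) + gM s w (S1 :&: S3) + w i0 <= gM s w S1 + gM s w S3.
Proof.
move=> hw h1 h2 h3; rewrite !gME -!big_split /=.
apply: (sum_special (i0:=i0)).
  rewrite (negbTE h3) h1 h2 (cM_mono _ h1) ?subsetUl //; lra.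
move=> i _; apply: le_ind4; last exact: B2.
apply: (wpos (i:=i) hw); exact: cM_ne.
Qed.

Lemma K3 (R : realFieldType) n (I : finType) (s : I -> {set 'I_n}) (w : I -> R) i0 S2 S4 :
  gwf s w -> ~~ cm (s i0) S2 -> ~~ cm (s i0) S4 -> cm (s i0) (S2 :|: S4) ->
  gm s w S2 + gm s w S4 + w i0 <= gm s w (S2 :|: S4) + gm s w (S2 :&: S4).
Proof.
move=> hw h1 h2 h3; rewrite !gmE -!big_split /=.
apply: (sum_special (i0:=i0)).
  rewrite (negbTE h1) (negbTE h2) h3.
  have := hw _ (cm_ne h3); case: ifP => _; lra.
move=> i _; apply: le_ind4; last exact: B3.
apply: (wpos (i:=i) hw); exact: cm_ne.
Qed.

Definition gnormal {R : realFieldType} {n} {I : finType} (t T : 'I_n -> R)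
  (s : I -> {set 'I_n}) (w : I -> R) :=
  forall S, dc_t t S <= gM s w S /\ gm s w S <= dc_t T S.

Lemma dc_tE (R : realFieldType) n (f : 'I_n -> R) S :
  dc_t f S = \sum_j (if j \in S then f j else 0).
Proof. exact: big_mkcond. Qed.

Lemma tsplit (R : realFieldType) n (t T : 'I_n -> R) S1 S2 :
  (forall j, t j <= T j) ->
  dc_t t S1 <= dc_t t (S1 :\: S2) + dc_t T (S1 :&: S2).
Proof.
move=> htT; rewrite !dc_tE -big_split /=; apply: ler_sum => j _.
rewrite !inE; have := htT j.
by case: (j \in S1); case: (j \in S2) => /=; lra.
Qed.

Lemma Tsplit (R : realFieldType) n (T : 'I_n -> R) S1 S2 :
  dc_t T S2 = dc_t T (S1 :&: S2) + dc_t T (S2 :\: S1).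
Proof.
rewrite !dc_tE -big_split /=; apply: eq_bigr => j _.
rewrite !inE.
by case: (j \in S1); case: (j \in S2) => /=; rewrite ?addr0 ?add0r.
Qed.

Lemma tmod (R : realFieldType) n (T : 'I_n -> R) S1 S3 :
  dc_t T S1 + dc_t T S3 = dc_t T (S1 :|: S3) + dc_t T (S1 :&: S3).
Proof.
rewrite !dc_tE -!big_split /=; apply: eq_bigr => j _.
rewrite !inE.
by case: (j \in S1); case: (j \in S3) => /=; rewrite ?addr0 ?add0r.
Qed.

Lemma MixAB (R : realFieldType) n (I : finType) (t T : 'I_n -> R)
  (s : I -> {set 'I_n}) (w : I -> R) i0 S1 S2 :
  gnormal t T s w -> (forall j, t j <= T j) -> gwf s w ->
  ~~ cM (s i0) (S1 :\: S2) -> ~~ cm (s i0) S2 -> cM (s i0) S1 ->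
  dc_t t S1 + gm s w S2 + w i0 <= dc_t T S2 + gM s w S1.
Proof.
move=> hn htT hw h1 h2 h3.
have := K1 hw h1 h2 h3.
have := tsplit S1 S2 htT.
have := Tsplit T S1 S2.
have [a _] := hn (S1 :\: S2).
have [_ b] := hn (S2 :\: S1).
lra.
Qed.

Lemma MixC (R : realFieldType) n (I : finType) (t T : 'I_n -> R)
  (s : I -> {set 'I_n}) (w : I -> R) i0 S1 S3 :
  gnormal t T s w -> gwf s w ->
  cM (s i0) S1 -> cM (s i0) S3 -> ~~ cM (s i0) (S1 :&: S3) ->
  dc_t t S1 + dc_t t S3 + w i0 <= gM s w S1 + gM s w S3.
Proof.
move=> hn hw h1 h2 h3.
have := K2 hw h1 h2 h3.
have := tmod t S1 S3.
have [a _] := hn (S1 :|: S3).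
have [b _] := hn (S1 :&: S3).
lra.
Qed.

Lemma MixD (R : realFieldType) n (I : finType) (t T : 'I_n -> R)
  (s : I -> {set 'I_n}) (w : I -> R) i0 S2 S4 :
  gnormal t T s w -> gwf s w ->
  ~~ cm (s i0) S2 -> ~~ cm (s i0) S4 -> cm (s i0) (S2 :|: S4) ->
  gm s w S2 + gm s w S4 + w i0 <= dc_t T S2 + dc_t T S4.
Proof.
move=> hn hw h1 h2 h3.
have := K3 hw h1 h2 h3.
have := tmod T S2 S4.
have [_ a] := hn (S2 :|: S4).
have [_ b] := hn (S2 :&: S4).
lra.
Qed.

Lemma between (R : realFieldType) (J : finType) (P1 P2 : pred J) (f g : J -> R) (j1 : J) :
  P1 j1 -> (forall p q, P1 p -> P2 q -> f p <= g q) ->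
  exists b, (forall p, P1 p -> f p <= b) /\ (forall q, P2 q -> b <= g q).
Proof.
move=> h1 h; case: (arg_maxP f h1) => p Pp hmax.
by exists (f p); split => [q Pq|q Pq]; [exact: hmax | exact: h].
Qed.

Definition ss {n} {I : finType} (s : I -> {set 'I_n}) i0 j (o : option I) :=
  match o with None => [set j] | Some i => if i == i0 then s i0 :\ j else s i end.
Definition ww {R : realFieldType} {I : finType} (w : I -> R) i0 b (o : option I) :=
  match o with None => w i0 - b | Some i => if i == i0 then b else w i end.

Lemma sum_upd (R : realFieldType) (I : finType) (i0 : I) (F G : I -> R) :
  (forall i, i != i0 -> F i = G i) -> \sum_i F i = \sum_i G i - G i0 + F i0.
Proof.
move=> h; rewrite (bigD1 i0) //= [X in _ = X - _ + _](bigD1 i0) //=.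
rewrite (eq_bigr _ h); lra.
Qed.

Lemma cM1 n (j : 'I_n) S : cM [set j] S = (j \in S).
Proof.
apply/cMP/idP => [[x]|h]; first by rewrite inE => /eqP ->.
by exists j; rewrite ?inE.
Qed.

Lemma cm1 n (j : 'I_n) S : cm [set j] S = (j \in S).
Proof.
rewrite /cm sub1set; have -> : ([set j] != set0) by apply/set0Pn; exists j; rewrite inE.
by [].
Qed.

Lemma gM_split (R : realFieldType) n (I : finType) (s : I -> {set 'I_n}) (w : I -> R) i0 j b S :
  gM (ss s i0 j) (ww w i0 b) S =
  (if j \in S then w i0 - b else 0) + (if cM (s i0 :\ j) S then b else 0)
  + gM s w S - (if cM (s i0) S then w i0 else 0).
Proof.
rewrite !gME sum_option /= cM1.
rewrite (sum_upd (i0:=i0) (G := fun i => if cM (s i) S then w i else 0)) /=.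
  rewrite eqxx; lra.
by move=> i /negbTE ->.
Qed.

Lemma gm_split (R : realFieldType) n (I : finType) (s : I -> {set 'I_n}) (w : I -> R) i0 j b S :
  gm (ss s i0 j) (ww w i0 b) S =
  (if j \in S then w i0 - b else 0) + (if cm (s i0 :\ j) S then b else 0)
  + gm s w S - (if cm (s i0) S then w i0 else 0).
Proof.
rewrite !gmE sum_option /= cm1.
rewrite (sum_upd (i0:=i0) (G := fun i => if cm (s i) S then w i else 0)) /=.
  rewrite eqxx; lra.
by move=> i /negbTE ->.
Qed.

Lemma cM_Q n (Q S : {set 'I_n}) j : j \in Q -> cM Q S = (j \in S) || cM (Q :\ j) S.
Proof.
move=> hj; apply/cMP/orP => [[x hx hs]|[h|/cMP [x]]].
- case: (eqVneq x j) => [e|ne]; first by left; rewrite -e.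
  by right; apply/cMP; exists x => //; rewrite !inE hx andbT.
- by exists j.
- by rewrite inE => /andP [_ hx] hs; exists x.
Qed.

Lemma cm_Q n (Q S : {set 'I_n}) j : j \in Q -> cm Q S = (j \in S) && (Q :\ j \subset S).
Proof.
move=> hj; rewrite /cm; have -> : (Q != set0) by apply/set0Pn; exists j.
apply/idP/andP => [h|[h1 h2]].
  by rewrite (subsetP h _ hj) (subset_trans _ h) // subD1set.
apply/subsetP => x hx; case: (eqVneq x j) => [->//|ne].
by apply: (subsetP h2); rewrite !inE hx andbT.
Qed.

Lemma cm_Q' n (Q S : {set 'I_n}) j : Q :\ j != set0 -> cm (Q :\ j) S = (Q :\ j \subset S).
Proof. by rewrite /cm => ->. Qed.

Lemma split_step (R : realFieldType) n (I : finType) (t T : 'I_n -> R)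
  (s : I -> {set 'I_n}) (w : I -> R) i0 j :
  gnormal t T s w -> (forall j, t j <= T j) -> gwf s w ->
  j \in s i0 -> s i0 :\ j != set0 ->
  exists b, 0 <= b /\ b <= w i0 /\ gnormal t T (ss s i0 j) (ww w i0 b).
Proof.
move=> hn htT hw hj hQ'.
have hQ : s i0 != set0 by apply/set0Pn; exists j.
pose P1 := fun (p : option ({set 'I_n} * bool)) => match p with
  | None => true
  | Some (Y, true) => (j \notin Y) && cM (s i0 :\ j) Y
  | Some (Y, false) => (j \in Y) && ~~ (s i0 :\ j \subset Y) end.
pose f := fun (p : option ({set 'I_n} * bool)) => match p with
  | None => 0
  | Some (Y, true) => dc_t t Y - gM s w Y + w i0
  | Some (Y, false) => gm s w Y + w i0 - dc_t T Y end.
pose P2 := fun (p : option ({set 'I_n} * bool)) => match p with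
  | None => true
  | Some (Y, true) => (j \notin Y) && (s i0 :\ j \subset Y)
  | Some (Y, false) => (j \in Y) && ~~ cM (s i0 :\ j) Y end.
pose g := fun (p : option ({set 'I_n} * bool)) => match p with
  | None => w i0
  | Some (Y, true) => dc_t T Y - gm s w Y
  | Some (Y, false) => gM s w Y - dc_t t Y end.
have [b [hl hu]] : exists b, (forall p, P1 p -> f p <= b) /\ (forall q, P2 q -> b <= g q).
  apply: (between (j1 := None)) => // [] [[S1 []]|] [[S2 []]|] //=.
  -
    case/andP => h1 h2 /andP [h3 h4].
    have hA : ~~ cM (s i0) (S1 :\: S2).
      rewrite (cM_Q _ hj) inE (negbTE h1) andbF /=; apply/negP => /cMP [x hx].
      by rewrite inE (subsetP h4 _ hx).
    have hB : ~~ cm (s i0) S2 by rewrite (cm_Q _ hj) (negbTE h3).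
    have hC : cM (s i0) S1 by rewrite (cM_Q _ hj) h2 orbT.
    have := MixAB hn htT hw hA hB hC; lra.
  -
    case/andP => h1 h2 /andP [h3 h4].
    have hA : cM (s i0) S1 by rewrite (cM_Q _ hj) h2 orbT.
    have hB : cM (s i0) S2 by rewrite (cM_Q _ hj) h3.
    have hC : ~~ cM (s i0) (S1 :&: S2).
      rewrite (cM_Q _ hj) inE (negbTE h1) /=; apply/negP => h.
      by rewrite (cM_mono _ h) ?subsetIr in h4.
    have := MixC hn hw hA hB hC; lra.
  - move=> _ _; have := hn S1; case; lra.
  -
    case/andP => h1 h2 /andP [h3 h4].
    have hA : ~~ cm (s i0) S2 by rewrite (cm_Q _ hj) (negbTE h3).
    have hB : ~~ cm (s i0) S1 by rewrite (cm_Q _ hj) (negbTE h2) andbF.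
    have hC : cm (s i0) (S2 :|: S1).
      by rewrite (cm_Q _ hj) inE h1 orbT (subset_trans h4) ?subsetUl.
    have := MixD hn hw hA hB hC; lra.
  -
    case/andP => h1 h2 /andP [h3 h4].
    have hA : ~~ cM (s i0) (S2 :\: S1).
      rewrite (cM_Q _ hj) inE h1 /=; apply/negP => h.
      by rewrite (cM_mono _ h) ?subsetDl in h4.
    have hB : ~~ cm (s i0) S1 by rewrite (cm_Q _ hj) (negbTE h2) andbF.
    have hC : cM (s i0) S2 by rewrite (cM_Q _ hj) h3.
    have := MixAB hn htT hw hA hB hC; lra.
  - move=> _ _; have := hn S1; case; lra.
  - move=> _ _; have := hn S2; case; lra.
  - move=> _ _; have := hn S2; case; lra.
  - move=> _ _; exact: hw.
exists b; split; first exact: (hl None).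
split; first exact: (hu None).
move=> S; rewrite gM_split gm_split (cM_Q _ hj) (cm_Q _ hj) (cm_Q' _ hQ').
have g1 : (j \notin S) && cM (s i0 :\ j) S ==> (dc_t t S - gM s w S + w i0 <= b).
  by apply/implyP => h; exact: (hl (Some (S, true))).
have g2 : (j \in S) && ~~ (s i0 :\ j \subset S) ==> (gm s w S + w i0 - dc_t T S <= b).
  by apply/implyP => h; exact: (hl (Some (S, false))).
have g3 : (j \notin S) && (s i0 :\ j \subset S) ==> (b <= dc_t T S - gm s w S).
  by apply/implyP => h; exact: (hu (Some (S, true))).
have g4 : (j \in S) && ~~ cM (s i0 :\ j) S ==> (b <= gM s w S - dc_t t S).
  by apply/implyP => h; exact: (hu (Some (S, false))).
have [n1 n2] := hn S.
move: g1 g2 g3 g4.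
case: (j \in S); case: (cM (s i0 :\ j) S); case: (s i0 :\ j \subset S) => /= g1 g2 g3 g4;
  split; lra.
Qed.

Definition msr {n} {I : finType} (s : I -> {set 'I_n}) : nat :=
  \sum_(i | s i != set0) (#|s i|).-1.

Definition gsat {R : realFieldType} {n} {I : finType} (t T : 'I_n -> R)
  (s : I -> {set 'I_n}) (w : I -> R) :=
  exists x : I -> 'I_n -> R,
    (forall i j, s i != set0 -> 0 <= x i j) /\
    (forall i j, s i != set0 -> j \notin s i -> x i j = 0) /\
    (forall i, s i != set0 -> \sum_j x i j = w i) /\
    (forall j, t j <= \sum_(i | s i != set0) x i j <= T j).

Lemma cMs1 n (X : {set 'I_n}) k : cM X [set k] = (k \in X).
Proof.
apply/cMP/idP => [[x hx]|h]; first by rewrite inE => /eqP <-.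
by exists k; rewrite ?inE.
Qed.

Lemma base (R : realFieldType) n (I : finType) (t T : 'I_n -> R)
  (s : I -> {set 'I_n}) (w : I -> R) :
  (forall i, s i != set0 -> (#|s i| <= 1)%N) -> gnormal t T s w -> gwf s w ->
  gsat t T s w.
Proof.
move=> h1 hn hw.
exists (fun i k => if k \in s i then w i else 0); split; [|split; [|split]].
- by move=> i k hne; case: ifP => // _; apply: hw.
- by move=> i k _ /negbTE ->.
- move=> i hne; rewrite -big_mkcond /= sumr_const.
  have -> : #|s i| = 1%N.
    by apply/eqP; rewrite eqn_leq h1 // card_gt0.
  by rewrite mulr1n.
- move=> k.
  have e1 : \sum_(i | s i != set0) (if k \in s i then w i else 0) = gM s w [set k].
    rewrite gME big_mkcond /=; apply: eq_bigr => i _; rewrite cMs1.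
    by case: (eqVneq (s i) set0) => [->|]; rewrite ?inE.
  have e2 : \sum_(i | s i != set0) (if k \in s i then w i else 0) = gm s w [set k].
    rewrite gmE big_mkcond /=; apply: eq_bigr => i _.
    case: (eqVneq (s i) set0) => [->|ne]; first by rewrite inE /cm eqxx.
    have : #|s i| == 1%N by rewrite eqn_leq h1 // card_gt0.
    case/cards1P => a ->; rewrite /cm sub1set !inE eq_sym.
    have -> : [set a] != set0 by apply/set0Pn; exists a; rewrite inE.
    by [].
  have [a b] := hn [set k].
  apply/andP; split; [rewrite e1; move: a | rewrite e2; move: b];
    by rewrite /dc_t big_set1.
Qed.

Lemma set1_ne n (j : 'I_n) : [set j] != set0.
Proof. by apply/set0Pn; exists j; rewrite inE. Qed.

Lemma recon (R : realFieldType) n (I : finType) (t T : 'I_n -> R)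
  (s : I -> {set 'I_n}) (w : I -> R) i0 j b :
  j \in s i0 -> s i0 :\ j != set0 ->
  gsat t T (ss s i0 j) (ww w i0 b) -> gsat t T s w.
Proof.
move=> hj hQ' [x [h1 [h2 [h3 h4]]]].
have hQ : s i0 != set0 by apply/set0Pn; exists j.
exists (fun i k => if i == i0 then x (Some i0) k + x None k else x (Some i) k).
split; [|split; [|split]].
- move=> i k hne; case: (eqVneq i i0) => [e|ne]; first subst i.
    have := h1 (Some i0) k; have := h1 None k; rewrite /= eqxx set1_ne => /(_ isT) a /(_ hQ') c.
    lra.
  by apply: (h1 (Some i)); rewrite /= (negbTE ne).
- move=> i k hne hk; case: (eqVneq i i0) => [e|ne].
    subst i.
    rewrite (h2 (Some i0) k) /=; last 2 first.
    + by rewrite eqxx.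
    + by rewrite eqxx !inE negb_and hk orbT.
    rewrite (h2 None k) /= ?set1_ne ?addr0 //.
    by rewrite inE; apply/negP => /eqP e; rewrite e hj in hk.
  by apply: (h2 (Some i)); rewrite /= (negbTE ne).
- move=> i hne; case: (eqVneq i i0) => [e|ne]; first subst i.
    rewrite big_split /= (h3 (Some i0)) /= ?eqxx // (h3 None) /= ?set1_ne //.
    lra.
  by rewrite (h3 (Some i)) /= (negbTE ne).
- move=> k; rewrite -[X in _ <= X <= _]/(\sum_(i | s i != set0) (if i == i0 then x (Some i0) k + x None k else x (Some i) k)).
  suff -> : \sum_(i | s i != set0) (if i == i0 then x (Some i0) k + x None k else x (Some i) k)
          = \sum_(o | ss s i0 j o != set0) x o k by exact: h4.
  rewrite [RHS]big_mkcond sum_option /= set1_ne big_mkcond /=.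
  set G := fun i => if ss s i0 j (Some i) != set0 then x (Some i) k else 0.
  rewrite (sum_upd (i0 := i0) (G := G)) /G /= ?eqxx ?hQ' ?hQ; first lra.
  by move=> i ne; rewrite (negbTE ne).
Qed.

Lemma msr_lt n (I : finType) (s : I -> {set 'I_n}) i0 j :
  j \in s i0 -> s i0 :\ j != set0 -> (msr (ss s i0 j) < msr s)%N.
Proof.
move=> hj hQ'.
have hQ : s i0 != set0 by apply/set0Pn; exists j.
rewrite /msr big_mkcond [X in (_ < X)%N]big_mkcond /=.
have -> : \sum_(o : option I) (if ss s i0 j o != set0 then (#|ss s i0 j o|).-1 else 0%N)
   = (\sum_i (if ss s i0 j (Some i) != set0 then (#|ss s i0 j (Some i)|).-1 else 0%N))%N.
  rewrite [LHS](bigD1 None) //= set1_ne cards1 /= ?add0n.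
  rewrite (reindex_omap Some id) /=; last by case.
  by apply: eq_bigl => i; rewrite eqxx.
rewrite [X in (X < _)%N](bigD1 i0) //= [X in (_ < X)%N](bigD1 i0) //= eqxx hQ hQ'.
rewrite (eq_bigr (fun i => if s i != set0 then (#|s i|).-1 else 0%N)); last first.
  by move=> i /negbTE ->.
rewrite ltn_add2r.
have := cardsD1 j (s i0); rewrite hj.
have : (0 < #|s i0 :\ j|)%N by rewrite card_gt0.
move: (#|s i0 :\ j|) (#|s i0|) => a c h ->.
by case: a h.
Qed.

Lemma step (R : realFieldType) n (t T : 'I_n -> R) (I : finType)
  (s : I -> {set 'I_n}) (w : I -> R) i0 :
  (forall j, t j <= T j) -> gnormal t T s w -> gwf s w ->
  s i0 != set0 -> (1 < #|s i0|)%N ->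
  exists (J : finType) (s' : J -> {set 'I_n}) (w' : J -> R),
    [/\ (msr s' < msr s)%N, gnormal t T s' w', gwf s' w' & (gsat t T s' w' -> gsat t T s w)].
Proof.
move=> htT hn hw hne hc.
have [j hj] := set0Pn _ hne.
have hQ' : s i0 :\ j != set0.
  by rewrite -card_gt0; move: hc; rewrite (cardsD1 j) hj.
have [b [hb0 [hb1 hn']]] := split_step hn htT hw hj hQ'.
exists (option I); exists (ss s i0 j); exists (ww w i0 b); split.
- exact: msr_lt.
- exact: hn'.
- move=> [i|] /=; last by lra.
  by case: (i == i0) => // /hw.
- exact: recon.
Qed.

Lemma gmain (R : realFieldType) n (t T : 'I_n -> R) :
  (forall j, t j <= T j) ->
  forall k (I : finType) (s : I -> {set 'I_n}) (w : I -> R),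
  (msr s <= k)%N -> gnormal t T s w -> gwf s w -> gsat t T s w.
Proof.
move=> htT k; elim: k => [|k IH] I s w hm hn hw;
  (case: (pickP (fun i => (s i != set0) && (1 < #|s i|)%N)) => [i0 /andP [hne hc] | hnone];
   last by apply: base => // i hi; move: (hnone i); rewrite /= hi /=; case: ltnP).
  have [J [s' [w' [hlt _ _ _]]]] := step htT hn hw hne hc.
  by move: hm; rewrite leqn0 => /eqP e; rewrite e in hlt.
have [J [s' [w' [hlt hn' hw' himp]]]] := step htT hn hw hne hc.
apply: himp; apply: IH => //.
by rewrite -ltnS (leq_trans hlt hm).
Qed.

Unset Implicit Arguments.

Theorem mainTheorem16 (R : realFieldType) (n : nat) (mu : {set 'I_n} -> R)
    (t T : 'I_n -> R) :
  dc_wf mu t T -> dc_normal mu t T -> dc_satisfiable mu t T.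
Proof.
move=> [hmu htT] hnorm.
have htT' : forall j, t j <= T j by move=> j; case: (htT j).
have hn : gnormal t T (fun Q : {set 'I_n} => Q) mu.
{ move=> S; case: (eqVneq S set0) => [->|ne]; last exact: hnorm.
  rewrite /dc_t /gM /gm !big_pred0 //=.
  all: move=> x /=; rewrite ?inE /cm /cM ?subset0 ?andNb ?setI0 ?eqxx //. }
exact: (gmain htT' (leqnn _) hn hmu).
Qed.
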